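(* Let $\Phi$ be the closure $cl(\varphi_0)$ of a formula, $M^*$ the canonical model for $\Phi$, and $\Gamma,\Delta\in W^*$. If the formula $\bigwedge\Gamma\wedge\neg[\approx]_iI_i\neg\bigwedge\Delta$ is consistent (i.e. its negation is not provable in $\mathbf{AIL}$), then $(\Gamma,\Delta)\in\sim_i^*\circ\approx_i^*$.
   Context: $\mathcal{L}_{AIL}$: $\varphi::=p\mid\neg\varphi\mid\varphi\wedge\varphi\mid A_i\varphi\mid I_i\varphi\mid E_i\varphi\mid[\approx]_i\varphi\mid[\circ^+]_i\varphi$ (countable atoms, finite agent set). Hilbert system $\mathbf{AIL}$: axioms — propositional tautologies; $A_i\varphi\leftrightarrow A_i\neg\varphi$; $A_i(\varphi\wedge\psi)\leftrightarrow A_i\varphi\wedge A_i\psi$; $A_i\varphi\leftrightarrow A_iO_j\varphi$ for $O_j\in\{A_j,I_j,[\approx]_j,[\circ^+]_j,E_j\}$; $A_i\varphi\to I_iA_i\varphi$; $\neg A_i\varphi\to I_i\neg A_i\varphi$; $A_ip\wedge p\to[\approx]_ip$; for $\Box\in\{I_i,[\approx]_i\}$: $\Box(\varphi\to\psi)\to(\Box\varphi\to\Box\psi)$, $\Box\varphi\to\varphi$, $\neg\Box\varphi\to\Box\neg\Box\varphi$; $[\circ^+]_i(\varphi\to\psi)\to([\circ^+]_i\varphi\to[\circ^+]_i\psi)$; $[\circ^+]_i\varphi\to\varphi\wedge[\approx]_iI_i[\circ^+]_i\varphi$; $[\circ^+]_i(\varphi\to[\approx]_iI_i\varphi)\to(\varphi\to[\circ^+]_i\varphi)$;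 $E_i\varphi\leftrightarrow A_i\varphi\wedge[\circ^+]_i\varphi$; rules: modus ponens, necessitation for $I_i,[\approx]_i,[\circ^+]_i$. $\Gamma\vdash\varphi$ iff $\vdash\bigwedge\Gamma'\to\varphi$ for some finite $\Gamma'\subseteq\Gamma$. $cl(\varphi_0)$ is the smallest (finite) set containing $\varphi_0$ closed under: subformulas; $\neg\psi$ for non-negations $\psi$; $A_i\psi\Rightarrow A_i\chi$ for subformulas $\chi$ of $\psi$; $A_i\psi\Rightarrow I_iA_i\psi,I_i\neg A_i\psi,[\approx]_ip$ for atoms $p$ in $\psi$; $I_i\psi\Rightarrow I_iI_i\psi,I_i\neg I_i\psi$ unless $\psi$ is $I_i\chi$ or $\neg I_i\chi$; analogously for $[\approx]_i$; $[\circ^+]_i\psi\Rightarrow[\approx]_iI_i[\circ^+]_i\psi$; $E_i\psi\Rightarrow A_i\psi,[\circ^+]_i\psi$. $W^*$ is the set of maximal consistent sets in $\Phi$ (subsets $\Gamma\subseteq\Phi$ with $\Gamma\nvdash\bot$ not properly extendable within $\Phi$); $\bigwedge\Gamma$ is the conjunction of the (finitely many) elements of $\Gamma$. $(\Gamma,\Delta)\in\sim_i^*$ iff $\{\psi:I_i\psi\in\Gamma\}\subseteq\Delta$; $(\Gamma,\Delta)\in\approx_i^*$ iff $\{\psi:[\approx]_i\psi\in\Gamma\}\subseteq\Delta$; $\sim_i^*\circ\approx_i^*=\{(\Gamma,\Delta):\exists\Theta\in W^*\,((\Gamma,\Theta)\in\approx_i^*,(\Theta,\Delta)\in\sim_i^*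 )\}$. *)

(* Defs.v *)
From Stdlib Require Import List.
From mathcomp Require Import ssreflect ssrbool eqtype choice fintype.

Set Implicit Arguments.

Inductive form (Ag : Type) : Type :=
| Atom : nat -> form Ag
| Neg  : form Ag -> form Ag
| And  : form Ag -> form Ag -> form Ag
| Aw   : Ag -> form Ag -> form Ag
| Kn   : Ag -> form Ag -> form Ag   (* I_i *)
| Ex   : Ag -> form Ag -> form Ag
| Ind  : Ag -> form Ag -> form Ag   (* [~~]_i  (the [approx]_i modality) *)
| Cp   : Ag -> form Ag -> form Ag.

Arguments Atom {Ag} _.

Definition Imp {Ag} (a b : form Ag) : form Ag := Neg (And a (Neg b)).
Definition Iff {Ag} (a b : form Ag) : form Ag := And (Imp a b) (Imp b a).
Definition Top {Ag} : form Ag := Neg (And (Atom 0) (Neg (Atom 0))).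
Definition Bot {Ag} : form Ag := Neg Top.

(* Propositional tautologies: true under every boolean valuation of the
   propositional atoms and of the modal formulas (treated as atoms). *)
Fixpoint teval {Ag} (v : form Ag -> bool) (f : form Ag) : bool :=
  match f with
  | Neg a => negb (teval v a)
  | And a b => teval v a && teval v b
  | _ => v f
  end.
Definition tautology {Ag} (f : form Ag) : Prop := forall v, teval v f = true.

Inductive Prov {Ag : Type} : form Ag -> Prop :=
| ax_taut f : tautology f -> Prov f
| ax_A_neg i f : Prov (Iff (Aw i f) (Aw i (Neg f)))
| ax_A_and i f g : Prov (Iff (Aw i (And f g)) (And (Aw i f) (Aw i g)))
| ax_A_A i j f : Prov (Iff (Aw i f) (Aw i (Aw j f)))
| ax_A_I i j f : Prov (Iff (Aw i f) (Aw i (Kn j f)))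
| ax_A_Ind i j f : Prov (Iff (Aw i f) (Aw i (Ind j f)))
| ax_A_Cp i j f : Prov (Iff (Aw i f) (Aw i (Cp j f)))
| ax_A_E i j f : Prov (Iff (Aw i f) (Aw i (Ex j f)))
| ax_A_IA i f : Prov (Imp (Aw i f) (Kn i (Aw i f)))
| ax_nA_InA i f : Prov (Imp (Neg (Aw i f)) (Kn i (Neg (Aw i f))))
| ax_A_atom i p : Prov (Imp (And (Aw i (Atom p)) (Atom p)) (Ind i (Atom p)))
| ax_K_I i f g : Prov (Imp (Kn i (Imp f g)) (Imp (Kn i f) (Kn i g)))
| ax_T_I i f : Prov (Imp (Kn i f) f)
| ax_5_I i f : Prov (Imp (Neg (Kn i f)) (Kn i (Neg (Kn i f))))
| ax_K_Ind i f g : Prov (Imp (Ind i (Imp f g)) (Imp (Ind i f) (Ind i g)))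
| ax_T_Ind i f : Prov (Imp (Ind i f) f)
| ax_5_Ind i f : Prov (Imp (Neg (Ind i f)) (Ind i (Neg (Ind i f))))
| ax_K_Cp i f g : Prov (Imp (Cp i (Imp f g)) (Imp (Cp i f) (Cp i g)))
| ax_Cp_mix i f : Prov (Imp (Cp i f) (And f (Ind i (Kn i (Cp i f)))))
| ax_Cp_ind i f : Prov (Imp (Cp i (Imp f (Ind i (Kn i f)))) (Imp f (Cp i f)))
| ax_E i f : Prov (Iff (Ex i f) (And (Aw i f) (Cp i f)))
| r_mp f g : Prov (Imp f g) -> Prov f -> Prov g
| r_nec_I i f : Prov f -> Prov (Kn i f)
| r_nec_Ind i f : Prov f -> Prov (Ind i f)
| r_nec_Cp i f : Prov f -> Prov (Cp i f).

Fixpoint bigconj {Ag} (l : list (form Ag)) : form Ag :=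
  match l with
  | nil => Top
  | cons a l' => And a (bigconj l')
  end.

Definition Deriv {Ag} (G : form Ag -> Prop) (f : form Ag) : Prop :=
  exists l : list (form Ag), (forall x, List.In x l -> G x) /\ Prov (Imp (bigconj l) f).

Definition enumerates {Ag} (l : list (form Ag)) (G : form Ag -> Prop) : Prop :=
  forall x, List.In x l <-> G x.

Inductive subf {Ag} : form Ag -> form Ag -> Prop :=
| subf_refl f : subf f f
| subf_neg c f : subf c f -> subf c (Neg f)
| subf_andl c f g : subf c f -> subf c (And f g)
| subf_andr c f g : subf c g -> subf c (And f g)
| subf_Aw c i f : subf c f -> subf c (Aw i f)
| subf_Kn c i f : subf c f -> subf c (Kn i f)
| subf_Ex c i f : subf c f -> subf c (Ex i f)
| subf_Ind c i f : subf c f -> subf c (Ind i f)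
| subf_Cp c i f : subf c f -> subf c (Cp i f).

Definition is_neg {Ag} (f : form Ag) : Prop := exists g, f = Neg g.

Inductive cl {Ag} (phi0 : form Ag) : form Ag -> Prop :=
| cl_base : cl phi0 phi0
| cl_sub f g : cl phi0 f -> subf g f -> cl phi0 g
| cl_negate f : cl phi0 f -> ~ is_neg f -> cl phi0 (Neg f)
| cl_A_sub i f g : cl phi0 (Aw i f) -> subf g f -> cl phi0 (Aw i g)
| cl_A_IA i f : cl phi0 (Aw i f) -> cl phi0 (Kn i (Aw i f))
| cl_A_InA i f : cl phi0 (Aw i f) -> cl phi0 (Kn i (Neg (Aw i f)))
| cl_A_atom i f p : cl phi0 (Aw i f) -> subf (Atom p) f -> cl phi0 (Ind i (Atom p))
| cl_I_II i f : cl phi0 (Kn i f) ->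
    ~ (exists g, f = Kn i g \/ f = Neg (Kn i g)) -> cl phi0 (Kn i (Kn i f))
| cl_I_InI i f : cl phi0 (Kn i f) ->
    ~ (exists g, f = Kn i g \/ f = Neg (Kn i g)) -> cl phi0 (Kn i (Neg (Kn i f)))
| cl_Ind_II i f : cl phi0 (Ind i f) ->
    ~ (exists g, f = Ind i g \/ f = Neg (Ind i g)) -> cl phi0 (Ind i (Ind i f))
| cl_Ind_InI i f : cl phi0 (Ind i f) ->
    ~ (exists g, f = Ind i g \/ f = Neg (Ind i g)) -> cl phi0 (Ind i (Neg (Ind i f)))
| cl_Cp i f : cl phi0 (Cp i f) -> cl phi0 (Ind i (Kn i (Cp i f)))
| cl_E_A i f : cl phi0 (Ex i f) -> cl phi0 (Aw i f)
| cl_E_Cp i f : cl phi0 (Ex i f) -> cl phi0 (Cp i f).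

(* W^*: maximal consistent sets in Phi *)
Definition mcs_in {Ag} (Phi G : form Ag -> Prop) : Prop :=
  (forall x, G x -> Phi x) /\ ~ Deriv G Bot /\
  (forall G' : form Ag -> Prop,
     (forall x, G x -> G' x) -> (forall x, G' x -> Phi x) -> ~ Deriv G' Bot ->
     forall x, G' x -> G x).

Definition simR {Ag} (i : Ag) (G D : form Ag -> Prop) : Prop :=
  forall f, G (Kn i f) -> D f.
Definition approxR {Ag} (i : Ag) (G D : form Ag -> Prop) : Prop :=
  forall f, G (Ind i f) -> D f.
(* sim_i^* o approx_i^* = {(G,D) : exists Theta in W^*, G approx Theta, Theta sim D} *)
Definition sim_o_approx {Ag} (Phi : form Ag -> Prop) (i : Ag) (G D : form Ag -> Prop) : Prop :=
  exists T, mcs_in Phi T /\ approxR i G T /\ simR i T D.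

(* Main.v *)
Require Import Defs.
From Stdlib Require Import List Classical PeanoNat.
From mathcomp Require Import ssreflect ssrfun ssrbool eqtype choice fintype.

Lemma teval_Top {Ag} (v : form Ag -> bool) : teval v Top = true.
Proof. unfold Top; simpl; destruct (v (Atom 0)); reflexivity. Qed.
Lemma teval_Bot {Ag} (v : form Ag -> bool) : teval v Bot = false.
Proof. change (teval v Bot) with (negb (teval v Top)); rewrite teval_Top; reflexivity. Qed.
Opaque Top Bot.

Ltac bdestr := repeat match goal with
 | |- context [teval ?v ?x] => destruct (teval v x)
 | |- context [?v ?x] => match type of v with form _ -> bool => destruct (v x) end
 end; intros; simpl in *; congruence.

Lemma teval_bigconj {Ag} v (l : list (form Ag)) :
  teval v (bigconj l) = true <-> (forall x, In x l -> teval v x = true).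
Proof.
induction l as [|a l IH]; simpl.
- split; [intros _ x []| intros _]. apply teval_Top.
- split.
  + move/andP => [Ha Hl] x [<-|Hx]; auto. apply IH; auto.
  + intros H. apply/andP; split; auto. apply IH; auto.
Qed.

Lemma taut1 {Ag} (a b : form Ag) : Prov a ->
  (forall v, teval v a = true -> teval v b = true) -> Prov b.
Proof. intros Ha H. apply (@r_mp _ a b); [|exact Ha]. apply ax_taut. intro v.
unfold Imp; simpl. specialize (H v). destruct (teval v a); destruct (teval v b);
simpl; try reflexivity; discriminate (H (Logic.eq_refl)). Qed.

Lemma taut3 {Ag} (a b c d : form Ag) : Prov a -> Prov b -> Prov c ->
  (forall v, teval v a = true -> teval v b = true -> teval v c = true -> teval v d = true) -> Prov d.
Proof. intros Ha Hb Hc H.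
apply (@r_mp _ c d); [|exact Hc]. apply (@r_mp _ b (Imp c d)); [|exact Hb].
apply (@r_mp _ a (Imp b (Imp c d))); [|exact Ha]. apply ax_taut. intro v.
unfold Imp; simpl. specialize (H v). destruct (teval v a); destruct (teval v b);
destruct (teval v c); destruct (teval v d);
simpl; try reflexivity; discriminate (H (Logic.eq_refl) (Logic.eq_refl) (Logic.eq_refl)). Qed.

Lemma Ind_mono {Ag} (i : Ag) a b : Prov (Imp a b) -> Prov (Imp (Ind i a) (Ind i b)).
Proof. intro H. exact (r_mp (ax_K_Ind i a b) (r_nec_Ind i H)). Qed.
Lemma Kn_mono {Ag} (i : Ag) a b : Prov (Imp a b) -> Prov (Imp (Kn i a) (Kn i b)).
Proof. intro H. exact (r_mp (ax_K_I i a b) (r_nec_I i H)). Qed.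

Lemma combine {Ag} (i : Ag) g a b c : Prov (Imp g (Ind i a)) -> Prov (Imp g (Ind i b)) ->
  Prov (Imp a (Imp b c)) -> Prov (Imp g (Ind i c)).
Proof. intros Ha Hb Habc.
have H1 := Ind_mono i _ _ Habc. have H2 := ax_K_Ind i b c.
have H3 : Prov (Imp (Ind i a) (Imp (Ind i b) (Ind i c))).
{ apply (taut3 _ _ _ _ H1 H2 H1). intro v. unfold Imp; simpl. bdestr. }
apply (taut3 _ _ _ _ Ha Hb H3). intro v. unfold Imp; simpl. bdestr.
Qed.

Definition Deriv_mono {Ag} (A B : form Ag -> Prop) f :
  Deriv A f -> (forall x, A x -> B x) -> Deriv B f.
Proof. intros [l [Hl Hp]] H. exists l; split; auto. Qed.

Fixpoint enc {Ag : finType} (f : form Ag) : GenTree.tree (nat + Ag) :=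
  match f with
  | Atom p => GenTree.Leaf (inl p)
  | Neg a => GenTree.Node 0 (enc a :: nil)
  | And a b => GenTree.Node 1 (enc a :: enc b :: nil)
  | Aw j a => GenTree.Node 2 (GenTree.Leaf (inr j) :: enc a :: nil)
  | Kn j a => GenTree.Node 3 (GenTree.Leaf (inr j) :: enc a :: nil)
  | Ex j a => GenTree.Node 4 (GenTree.Leaf (inr j) :: enc a :: nil)
  | Ind j a => GenTree.Node 5 (GenTree.Leaf (inr j) :: enc a :: nil)
  | Cp j a => GenTree.Node 6 (GenTree.Leaf (inr j) :: enc a :: nil)
  end.

Lemma enc_inj {Ag : finType} (f g : form Ag) : enc f = enc g -> f = g.
Proof.
revert g; induction f; intros g; destruct g; simpl; intro H; try discriminate;
injection H; intros; subst; f_equal; auto.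
Qed.

Definition code {Ag : finType} (f : form Ag) : nat := pickle (enc f).
Lemma code_inj {Ag : finType} (f g : form Ag) : code f = code g -> f = g.
Proof. intro H. apply enc_inj. exact (pcan_inj pickleK H). Qed.

Fixpoint stage {Ag : finType} (Phi Sb : form Ag -> Prop) (n : nat) : form Ag -> Prop :=
  match n with
  | O => Sb
  | Datatypes.S n' => fun x => stage Phi Sb n' x \/
      (code x = n' /\ Phi x /\ ~ Deriv (fun y => stage Phi Sb n' y \/ y = x) Bot)
  end.

Lemma stage_mono {Ag : finType} Phi Sb (n m : nat) (x : form Ag) :
  stage Phi Sb n x -> le n m -> stage Phi Sb m x.
Proof. intros H Hle. induction Hle; simpl; auto. Qed.

Lemma stage_Phi {Ag : finType} (Phi Sb : form Ag -> Prop) n x :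
  (forall y, Sb y -> Phi y) -> stage Phi Sb n x -> Phi x.
Proof. intros HS. revert x; induction n; simpl; intros x; auto.
intros [H|[_ [H _]]]; auto. Qed.

Lemma stage_cons {Ag : finType} (Phi Sb : form Ag -> Prop) n :
  ~ Deriv Sb Bot -> ~ Deriv (stage Phi Sb n) Bot.
Proof. intro H0. induction n as [|n IH]; simpl; auto. intro HD.
destruct (classic (exists x0, code x0 = n /\ Phi x0 /\
   ~ Deriv (fun y => stage Phi Sb n y \/ y = x0) Bot)) as [[x0 [Hc [Hp Hnd]]] | Hno].
- apply Hnd; eapply Deriv_mono; [exact HD|].
  intros x [Hx|[Hc' _]]; [left; exact Hx| right; apply code_inj; congruence].
- apply IH; eapply Deriv_mono; [exact HD|].
  intros x [Hx|Hx']; [exact Hx| exfalso; apply Hno; exists x; exact Hx'].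
Qed.

Lemma list_in_stage {Ag : finType} (Phi Sb : form Ag -> Prop) l :
  (forall x, In x l -> exists n, stage Phi Sb n x) ->
  exists n, forall x, In x l -> stage Phi Sb n x.
Proof.
induction l as [|a l IH]; intros H.
- exists 0; intros x [].
- destruct (H a (or_introl (Logic.eq_refl))) as [n1 H1].
  destruct IH as [n2 H2]. { intros x Hx; apply H; right; exact Hx. }
  exists (Nat.max n1 n2). intros x [<-|Hx].
  + eapply stage_mono; [exact H1| apply Nat.le_max_l].
  + eapply stage_mono; [apply H2; exact Hx| apply Nat.le_max_r].
Qed.

Lemma lindenbaum {Ag : finType} (Phi Sb : form Ag -> Prop) :
  (forall x, Sb x -> Phi x) -> ~ Deriv Sb Bot ->
  exists T, mcs_in Phi T /\ (forall x, Sb x -> T x).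
Proof.
intros HS Hc. exists (fun x => exists n, stage Phi Sb n x). split; [split; [|split]|].
- intros x [n Hn]. exact (stage_Phi Phi Sb n x HS Hn).
- intros [l [Hl Hp]]. destruct (list_in_stage Phi Sb l Hl) as [n Hn].
  apply (stage_cons Phi Sb n Hc). exists l; split; auto.
- intros G' HsubG HG'Phi HG'cons x HG'x. exists (Datatypes.S (code x)). simpl.
  destruct (classic (stage Phi Sb (code x) x)) as [H|H]; [left; exact H|right].
  split; [reflexivity|split; [apply HG'Phi; exact HG'x|]].
  intro HD; apply HG'cons; eapply Deriv_mono; [exact HD|].
  intros y [Hy| ->]; [apply HsubG; exists (code x); exact Hy| exact HG'x].
- intros x Hx. exists 0. exact Hx.
Qed.

Theorem lemma10 (Ag : finType) (phi0 : form Ag) (i : Ag)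
  (G D : form Ag -> Prop) (lG lD : list (form Ag)) :
  mcs_in (cl phi0) G -> mcs_in (cl phi0) D ->
  enumerates lG G -> enumerates lD D ->
  ~ Prov (Neg (And (bigconj lG) (Neg (Ind i (Kn i (Neg (bigconj lD))))))) ->
  sim_o_approx (cl phi0) i G D.
Proof.
intros [GPhi [Gcons Gmax]] [DPhi [Dcons Dmax]] HeG HeD Hcons.
set N := Kn i (Neg (bigconj lD)).
set Sb := fun x => G (Ind i x) \/ exists c, x = Neg (Kn i c) /\ cl phi0 (Kn i c) /\ ~ D c.
have gamma_x : forall x, G x -> Prov (Imp (bigconj lG) x).
{ intros x Hx. apply ax_taut; intro v; unfold Imp; simpl.
  destruct (teval v (bigconj lG)) eqn:E; simpl; [|reflexivity].
  rewrite (proj1 (teval_bigconj v lG) E x (proj2 (HeG x) Hx)); reflexivity. }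
have keyB : forall c, cl phi0 (Kn i c) -> ~ D c -> Prov (Imp (Kn i c) N).
{ intros c Hcl Hnd. apply Kn_mono.
  have Hc : cl phi0 c by apply (cl_sub Hcl); apply subf_Kn; apply subf_refl.
  have HD : Deriv (fun y => D y \/ y = c) Bot.
  { apply NNPP; intro Hn. apply Hnd. apply (Dmax (fun y => D y \/ y = c)); auto.
    - intros y [Hy| ->]; auto. }
  destruct HD as [l [Hl Hp]]. apply (taut1 _ _ Hp). intro v. unfold Imp; simpl.
  rewrite teval_Bot.
  destruct (teval v c) eqn:Ec; destruct (teval v (bigconj lD)) eqn:Ed; simpl; auto.
  have -> : teval v (bigconj l) = true.
  { apply teval_bigconj. intros x Hx. destruct (Hl x Hx) as [Dx| ->]; [|exact Ec].
    apply (proj1 (teval_bigconj v lD) Ed). apply HeD; exact Dx. }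
  simpl; auto. }
have C : forall l, (forall x, In x l -> Sb x) ->
   Prov (Imp (bigconj lG) (Ind i (Imp (Neg (bigconj l)) N))).
{ induction l as [|a l IH]; intros Hl.
  - apply (taut1 (Ind i (Imp (Neg Top) N))).
    + apply r_nec_Ind, ax_taut. intro v. unfold Imp; simpl. rewrite teval_Top. reflexivity.
    + intro v. unfold Imp; simpl. bdestr.
  - have IHl := IH (fun x Hx => Hl x (or_intror Hx)).
    destruct (Hl a (or_introl (Logic.eq_refl))) as [HG | [c [-> [Hcl Hnd]]]].
    + apply (combine i _ _ _ _ (gamma_x _ HG) IHl). apply ax_taut. intro v.
      unfold Imp; simpl. bdestr.
    + have Hy : Prov (Imp (Neg (Neg (Kn i c))) N).
      { apply (taut1 _ _ (keyB c Hcl Hnd)). intro v. unfold Imp; simpl. bdestr. }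
      have Hy' : Prov (Imp (bigconj lG) (Ind i (Imp (Neg (Neg (Kn i c))) N))).
      { apply (taut1 _ _ (r_nec_Ind i Hy)). intro v. unfold Imp; simpl. bdestr. }
      apply (combine i _ _ _ _ Hy' IHl). apply ax_taut. intro v.
      unfold Imp; simpl. bdestr. }
have Scons : ~ Deriv Sb Bot.
{ intros [l [Hl Hp]]. apply Hcons.
  have H1 := C l Hl.
  have H2 : Prov (Ind i (Neg (bigconj l))).
  { apply r_nec_Ind. apply (taut1 _ _ Hp). intro v. unfold Imp; simpl.
    rewrite teval_Bot. bdestr. }
  apply (taut3 _ _ _ _ H1 (ax_K_Ind i (Neg (bigconj l)) N) H2). intro v.
  unfold Imp; simpl. fold N. bdestr. }
have SPhi : forall x, Sb x -> cl phi0 x.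
{ intros x [H|[c [-> [Hcl _]]]].
  - apply (cl_sub (GPhi _ H)). apply subf_Ind, subf_refl.
  - apply cl_negate; auto. intros [g Hg]; discriminate. }
destruct (lindenbaum _ _ SPhi Scons) as [T [HT HST]].
exists T. split; [exact HT|split].
- intros f Hf. apply HST. left; exact Hf.
- intros f Hf. apply NNPP; intro Hnd. destruct HT as [TPhi [Tcons _]]. apply Tcons.
  exists (Kn i f :: Neg (Kn i f) :: nil). split.
  + intros x [<-|[<-|[]]]; auto. apply HST. right. exists f; auto.
  + apply ax_taut. intro v. unfold Imp; simpl. rewrite teval_Bot. bdestr.
Qed.
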